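(* Let $a,b\in\mathbb{Q}_3$ with $\gamma(a)=\gamma(b)=-m<0$ ($m>0$). Then $x=\sum_{k\ge0}x_k3^k\in\mathbb{Z}_3^*$ is a solution of $x^3+ax=b$ if and only if the congruences $$a_0x_0\equiv b_0\pmod 3,$$ $$x_ka_0+x_{k-1}a_1+\dots+x_0a_k+M_k(x_0,\dots,x_{k-1})\equiv b_k\pmod3,\quad 1\le k\le m-1,$$ $$x_ma_0+x_{m-1}a_1+\dots+x_0a_m+x_0^3+M_m(x_0,\dots,x_{m-1})\equiv b_m\pmod3,$$ $$x_{m+1}a_0+x_ma_1+\dots+x_0a_{m+1}+M_{m+1}(x_0,\dots,x_m)\equiv b_{m+1}\pmod3,$$ $$x_ka_0+x_{k-1}a_1+\dots+x_0a_k+x_0^2x_{k-m-1}+N_{k-m}(x_0,\dots,x_{k-m-1})+M_k(x_0,\dots,x_{k-1})\equiv b_k\pmod3,\quad k\ge m+2,$$ are fulfilled, where the integers $M_k(x_0,\dots,x_{k-1})$ are defined successively by $$a_0x_0=b_0+3M_1(x_0),$$ $$x_ka_0+\dots+x_0a_k=b_k-M_k(x_0,\dots,x_{k-1})+3M_{k+1}(x_0,\dots,x_k),\quad1\le k\le m-1,$$ $$x_ma_0+\dots+x_0a_m+x_0^3=b_m-M_m(x_0,\dots,x_{m-1})+3M_{m+1}(x_0,\dots,x_m),$$ $$x_{m+1}a_0+\dots+x_0a_{m+1}=b_{m+1}-M_{m+1}(x_0,\dots,x_m)+3M_{m+2}(x_0,\dots,x_{m+1}),$$ $$x_ka_0+\dots+x_0a_k+x_0^2x_{k-m-1}+N_{k-m}(x_0,\dots,x_{k-m-1})=b_k-M_k(x_0,\dots,x_{k-1})+3M_{k+1}(x_0,\dots,x_k),\quad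 k\ge m+2.$$
   Context: Write $a=3^{\gamma(a)}(a_0+a_13+a_23^2+\dots)$, $b=3^{\gamma(b)}(b_0+b_13+b_23^2+\dots)$ in canonical form, with digits $a_j,b_j\in\{0,1,2\}$, $a_0,b_0\ne0$, $\gamma(a),\gamma(b)\in\mathbb{Z}$. $\mathbb{Z}_3^*$ is the set of $3$-adic units; $x\in\mathbb{Z}_3^*$ is written $x=x_0+x_13+x_23^2+\dots$ with $x_j\in\{0,1,2\}$, $x_0\ne0$. For $k\ge1$, $N_k(x_0,\dots,x_{k-1})=\sum \frac{3!}{m_0!\cdots m_{k-1}!}x_0^{m_0}\cdots x_{k-1}^{m_{k-1}}$, the sum over nonnegative integers $m_0,\dots,m_{k-1}$ with $\sum_{i=0}^{k-1}m_i=3$ and $\sum_{i=1}^{k-1}im_i=k$; in particular $N_1=0$. *)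

(* Defs.v *)
From HB Require Import structures.
From mathcomp Require Import all_boot all_order all_algebra.
Set Implicit Arguments. Unset Strict Implicit. Unset Printing Implicit Defensive.
Import Order.TTheory GRing.Theory Num.Theory.
Local Open Scope ring_scope.

(* A 3-adic digit sequence d_0 + d_1 3 + d_2 3^2 + ... *)
Definition digits := nat -> nat.

Definition trunc3 (d : digits) (n : nat) : int :=
  \sum_(i < n) (d i)%:Z * (3 : int) ^+ i.

(* A nonzero element of Q_3 in canonical form 3^gam (d_0 + d_1 3 + ...). *)
Record Q3c := mkQ3c { gam : int; dig : digits }.

Definition canonical_Q3 (a : Q3c) : Prop :=
  (forall j, (dig a j < 3)%N) /\ dig a 0 <> 0%N.

Definition Z3_unit (x : digits) : Prop :=
  (forall j, (x j < 3)%N) /\ x 0 <> 0%N.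

(* "x^3 + a x = b holds in Q_3", for x in Z_3 and a, b in Q_3 in canonical form.
   We multiply through by 3^(-c), c = min(0, gam a, gam b), obtaining an identity
   in Z_3 = lim Z/3^n Z, i.e. a congruence modulo 3^n of truncations for all n. *)
Definition Q3_cubic_eq (a b : Q3c) (x : digits) : Prop :=
  let c := Num.min 0 (Num.min (gam a) (gam b)) in
  forall n : nat,
    ((3 : int) ^+ n %|
       (3 : int) ^+ `|- c|%N * (trunc3 x n) ^+ 3
     + (3 : int) ^+ `|gam a - c|%N * trunc3 (dig a) n * trunc3 x n
     - (3 : int) ^+ `|gam b - c|%N * trunc3 (dig b) n)%Z.

(* N_k(x_0,...,x_(k-1)) = sum over (m_0,...,m_(k-1)) with sum m_i = 3 and
   sum i m_i = k of 3!/(m_0!...m_(k-1)!) x_0^m_0 ... x_(k-1)^m_(k-1).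
   (Each m_i <= 3, so ranging over 'I_4 loses nothing.) *)
Definition Npoly (k : nat) (x : digits) : int :=
  (\sum_(mm : {ffun 'I_k -> 'I_4} |
         ((\sum_(i < k) (mm i : nat)) == 3)%N &&
         ((\sum_(i < k) (i : nat) * (mm i : nat)) == k)%N)
      ((3`! %/ \prod_(i < k) (mm i : nat)`!)
        * \prod_(i < k) (x i) ^ (mm i : nat))%N)%:Z.

Definition conv (x a : digits) (k : nat) : int :=
  \sum_(i < k.+1) (x (k - i)%N)%:Z * (a i)%:Z.

(* The part of the k-th congruence other than M_k and b_k. *)
Definition Tterm (m : nat) (a x : digits) (k : nat) : int :=
  conv x a k
  + (if k == m then (x 0%N)%:Z ^+ 3 else 0)
  + (if (m.+2 <= k)%N
     then (x 0%N)%:Z ^+ 2 * (x (k - m.+1)%N)%:Z + Npoly (k - m)%N x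
     else 0).

(* M_0 = 0 and T_k = b_k - M_k + 3 M_(k+1) (M_(k+1) is an integer exactly when
   the k-th congruence holds; otherwise floor division is used). *)
Fixpoint Mseq (m : nat) (a b x : digits) (k : nat) : int :=
  match k with
  | 0%N => 0
  | k'.+1 => ((Tterm m a x k' - (b k')%:Z + Mseq m a b x k') %/ 3)%Z
  end.

Definition congr_k (m : nat) (a b x : digits) (k : nat) : Prop :=
  (3 %| Tterm m a x k + Mseq m a b x k - (b k)%:Z)%Z.

(* Main.v *)
Require Import Defs.
From HB Require Import structures.
From mathcomp Require Import all_boot all_order all_algebra.
From mathcomp Require Import ring zify.
Set Implicit Arguments. Unset Strict Implicit. Unset Printing Implicit Defensive.
Import Order.TTheory GRing.Theory Num.Theory.
Local Open Scope ring_scope.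

Definition sm k (mm : {ffun 'I_k -> 'I_4}) : nat := (\sum_(i < k) (mm i : nat))%N.
Definition ws k (mm : {ffun 'I_k -> 'I_4}) : nat := (\sum_(i < k) (i : nat) * (mm i : nat))%N.
Definition pf k (mm : {ffun 'I_k -> 'I_4}) : nat := (\prod_(i < k) (mm i : nat)`!)%N.
Definition mult k (mm : {ffun 'I_k -> 'I_4}) : nat := ((sm mm)`! %/ pf mm)%N.
Definition pd (d : digits) k (mm : {ffun 'I_k -> 'I_4}) : int :=
  \prod_(i < k) ((d i)%:Z ^+ (mm i : nat)).

Lemma fact_dvd k (g : 'I_k -> nat) : (\prod_(i<k) (g i)`! %| (\sum_(i<k) g i)`!)%N.
Proof.
elim: k g => [|k IH] g; first by rewrite !big_ord0.
rewrite !big_ord_recr /=.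
apply: (dvdn_trans (dvdn_mul (IH (fun i => g (widen_ord (leqnSn k) i))) (dvdnn _))).
set a := (\sum_(i<k) _)%N. set b := g ord_max.
rewrite -(bin_fact (leq_addr b a)) addKn.
by apply: dvdn_mull.
Qed.

Definition ext k (p : 'I_4 * {ffun 'I_k -> 'I_4}) : {ffun 'I_k.+1 -> 'I_4} :=
  [ffun i : 'I_k.+1 => odflt p.1 (omap p.2 (insub (i : nat)))].
Definition res k (g : {ffun 'I_k.+1 -> 'I_4}) : 'I_4 * {ffun 'I_k -> 'I_4} :=
  (g ord_max, [ffun j : 'I_k => g (widen_ord (leqnSn k) j)]).

Lemma ext_max k p : @ext k p ord_max = p.1.
Proof. by rewrite /ext ffunE insubN /= ?ltnn. Qed.
Lemma ext_widen k p (j : 'I_k) : ext p (widen_ord (leqnSn k) j) = p.2 j.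
Proof.
rewrite /ext ffunE /=.
have -> : insub (val (widen_ord (leqnSn k) j)) = Some j :> option 'I_k by rewrite /= valK.
by [].
Qed.
Lemma res_ext k p : res (@ext k p) = p.
Proof.
case: p => c f; rewrite /res ext_max; congr pair.
by apply/ffunP => j; rewrite ffunE ext_widen.
Qed.
Lemma ext_res k g : @ext k (res g) = g.
Proof.
apply/ffunP => i; have [lt|ge] := ltnP i k.
  have -> : i = widen_ord (leqnSn k) (Ordinal lt) by apply: val_inj.
  by rewrite ext_widen /= ffunE.
have -> : i = ord_max by apply: val_inj; apply/eqP; rewrite eqn_leq ge -ltnS ltn_ord.
by rewrite ext_max.
Qed.

Lemma sm_ext k c f : sm (@ext k (c, f)) = (sm f + c)%N.
Proof. by rewrite /sm big_ord_recr ext_max /=; congr addn; apply: eq_bigr => i _; rewrite ext_widen. Qed.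
Lemma ws_ext k c f : ws (@ext k (c, f)) = (ws f + k * c)%N.
Proof. by rewrite /ws big_ord_recr ext_max /=; congr addn; apply: eq_bigr => i _; rewrite ext_widen. Qed.
Lemma pf_ext k c f : pf (@ext k (c, f)) = (pf f * c`!)%N.
Proof. by rewrite /pf big_ord_recr ext_max /=; congr muln; apply: eq_bigr => i _; rewrite ext_widen. Qed.
Lemma pd_ext d k c f : pd d (@ext k (c, f)) = pd d f * (d k)%:Z ^+ c.
Proof. by rewrite /pd big_ord_recr ext_max /=; congr (_ * _); apply: eq_bigr => i _; rewrite ext_widen. Qed.

Lemma pf_gt0 k f : (0 < @pf k f)%N.
Proof. by apply: prodn_gt0 => i; apply: fact_gt0. Qed.

Lemma mult_ext k c f : mult (@ext k (c, f)) = ('C(sm f + c, c) * mult f)%N.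
Proof.
rewrite /mult sm_ext pf_ext.
have dv : (pf f %| (sm f)`!)%N by apply: fact_dvd.
set q := ((sm f)`! %/ pf f)%N.
have hq : (sm f)`! = (q * pf f)%N by rewrite /q divnK.
rewrite -(bin_fact (leq_addl (sm f) c)) addnK hq.
rewrite (_ : _ * _ = ('C(sm f + c, c) * q) * (pf f * c`!))%N; last by ring.
by rewrite mulnK // muln_gt0 pf_gt0 fact_gt0.
Qed.

Lemma GEN (d : digits) (Phi : nat -> nat -> int) k :
 \sum_(mm : {ffun 'I_k.+1 -> 'I_4}) Phi (sm mm) (ws mm) * (mult mm)%:Z * pd d mm =
 \sum_(c < 4) \sum_(mm : {ffun 'I_k -> 'I_4})
    Phi (sm mm + c)%N (ws mm + k * c)%N * ('C(sm mm + c, c) * mult mm)%:Z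
      * ((d k)%:Z ^+ c * pd d mm).
Proof.
rewrite (reindex (@ext k)); last first.
  by exists (@res k) => [p _|g _]; [apply: res_ext | apply: ext_res].
rewrite pair_big /=; apply: eq_bigr => [[c f]] _ /=.
by rewrite sm_ext ws_ext pd_ext mult_ext mulrC [pd d f * _]mulrC; ring.
Qed.

Lemma sum_ffun0 (F : {ffun 'I_0 -> 'I_4} -> int) :
  \sum_(mm : {ffun 'I_0 -> 'I_4}) F mm = F [ffun i => ord0].
Proof.
rewrite (big_pred1 [ffun i => ord0]) // => mm /=.
by apply/esym/eqP/ffunP => -[].
Qed.

Lemma sm0 (mm : {ffun 'I_0 -> 'I_4}) : sm mm = 0%N. Proof. by rewrite /sm big_ord0. Qed.
Lemma ws0 (mm : {ffun 'I_0 -> 'I_4}) : ws mm = 0%N. Proof. by rewrite /ws big_ord0. Qed.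
Lemma mult0 (mm : {ffun 'I_0 -> 'I_4}) : mult mm = 1%N.
Proof. by rewrite /mult sm0 /pf big_ord0. Qed.
Lemma pd0 d (mm : {ffun 'I_0 -> 'I_4}) : pd d mm = 1.
Proof. by rewrite /pd big_ord0. Qed.

Lemma trunc3S d k : trunc3 d k.+1 = trunc3 d k + (d k)%:Z * 3 ^+ k.
Proof. by rewrite /trunc3 big_ord_recr. Qed.

Definition Fs d k s : int := \sum_(mm : {ffun 'I_k -> 'I_4})
   ((sm mm == s)%:R * 3 ^+ ws mm) * (mult mm)%:Z * pd d mm.

Lemma Fs_trunc d k s : (s <= 3)%N -> Fs d k s = (trunc3 d k) ^+ s.
Proof.
elim: k s => [|k IH] s hs.
  by rewrite /Fs sum_ffun0 sm0 ws0 mult0 pd0 /trunc3 big_ord0 expr0n eq_sym; case: (s == 0%N).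
have E : Fs d k.+1 s = \sum_(c < 4) (c <= s)%N%:R * ('C(s,c)%:R * (d k)%:Z ^+ c * (3 ^+ k) ^+ c)
                          * (trunc3 d k) ^+ (s - c).
  rewrite /Fs (GEN d (fun t u => (t == s)%:R * 3 ^+ u)).
  apply: eq_bigr => c _.
  have [cs|cs] := leqP c s; last first.
    rewrite (_ : (false%:R : int) = 0) // !mul0r big1 // => mm _.
    have -> : (sm mm + c == s) = false.
      by apply/negbTE; rewrite neq_ltn; apply/orP; right; apply: (leq_trans cs); rewrite leq_addl.
    by rewrite !mul0r.
  rewrite -IH ?(leq_trans (leq_subr _ _)) // /Fs mul1r big_distrr /=.
  apply: eq_bigr => mm _.
  have [e|ne] := eqVneq (sm mm + c)%N s.
    have -> : (sm mm == s - c)%N by rewrite -e addnK.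
    rewrite -e exprD exprM PoszM -natz; ring.
  have -> : (sm mm == s - c)%N = false.
    by apply/negbTE; apply: contra ne => /eqP ->; rewrite subnK.
  by rewrite !mul0r mulr0.
rewrite E trunc3S exprDn.
have C21 : 'C(2,1) = 2%N by [].
have C31 : 'C(3,1) = 3%N by [].
have C32 : 'C(3,2) = 3%N by [].
case: s hs {E} => [|[|[|[|s]]]] // _; rewrite !big_ord_recr !big_ord0 /= ?C21 ?C31 ?C32 ?bin0 ?binn; ring.
Qed.

Definition Gw d k s w : int := \sum_(mm : {ffun 'I_k -> 'I_4})
   ((sm mm == s) && (ws mm == w))%:R * (mult mm)%:Z * pd d mm.

Lemma GwS d k s w : Gw d k.+1 s w = \sum_(c < 4) \sum_(mm : {ffun 'I_k -> 'I_4})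
    ((sm mm + c == s)%N && (ws mm + k * c == w)%N)%:R * ('C(sm mm + c, c) * mult mm)%:Z
      * ((d k)%:Z ^+ c * pd d mm).
Proof. by rewrite /Gw (GEN d (fun t u => ((t == s) && (u == w))%:R)). Qed.

Lemma G_stable d k s w : (w < k)%N -> Gw d k.+1 s w = Gw d k s w.
Proof.
move=> wk; rewrite GwS big_ord_recl [X in _ + X = _]big1 ?addr0; last first.
  move=> c _; apply: big1 => mm _.
  have -> : (ws mm + k * lift ord0 c == w)%N = false.
    apply/negbTE; rewrite neq_ltn; apply/orP; right.
    apply: (leq_trans wk); apply: leq_trans (leq_addl _ _).
    by rewrite lift0 leq_pmulr.
  by rewrite andbF !mul0r.
rewrite /Gw; apply: eq_bigr => mm _ /=.
by rewrite !addn0 muln0 addn0 bin0 mul1n expr0 mul1r.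
Qed.

Lemma G1_0 d s : (s <= 3)%N -> Gw d 1 s 0 = (d 0%N)%:Z ^+ s.
Proof.
move=> hs; rewrite GwS.
under eq_bigr => c _ do rewrite sum_ffun0 sm0 ws0 mult0 pd0 add0n mul0n eqxx andbT binn.
case: s hs => [|[|[|[|s]]]] // _; rewrite !big_ord_recl big_ord0 /=; ring.
Qed.

Lemma G_0 d k s : (0 < k)%N -> (s <= 3)%N -> Gw d k s 0 = (d 0%N)%:Z ^+ s.
Proof.
move=> + hs; elim: k => [//|[|k] IH _]; first by rewrite G1_0.
by rewrite G_stable // IH.
Qed.

Lemma G_far d K s w : (w < K)%N -> Gw d K s w = Gw d w.+1 s w.
Proof.
elim: K => [//|K IH]; rewrite ltnS leq_eqVlt => /orP [/eqP -> //|wK].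
by rewrite G_stable // IH.
Qed.

Lemma G_step d w : (0 < w)%N -> Gw d w.+1 3 w = Gw d w 3 w + 3 * (d w)%:Z * Gw d w 2 0.
Proof.
move=> w0; rewrite GwS !big_ord_recl big_ord0 /bump /= addr0.
congr (_ + _).
  by rewrite /Gw; apply: eq_bigr => mm _; rewrite !addn0 muln0 addn0 bin0 mul1n expr0 mul1r.
rewrite [X in _ + (_ + X)]big1 ?addr0; last first.
  move=> mm _; have -> : (ws mm + w * 3 == w)%N = false by apply/negbTE/eqP; lia.
  by rewrite andbF !mul0r.
rewrite [X in _ + X]big1 ?addr0; last first.
  move=> mm _; have -> : (ws mm + w * 2 == w)%N = false by apply/negbTE/eqP; lia.
  by rewrite andbF !mul0r.
rewrite /Gw big_distrr /=; apply: eq_bigr => mm _; rewrite /bump /=.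
have -> : (ws mm + w * 1 == w)%N = (ws mm == 0)%N by apply/eqP/eqP; lia.
have [e|ne] := eqVneq (sm mm) 2%N.
  rewrite e /= bin1 PoszM; ring.
have -> : (sm mm + 1 == 3)%N = false by apply/negbTE/eqP; lia.
by rewrite /= !mul0r mulr0.
Qed.

Lemma Npoly_G k x : Npoly k x = Gw x k 3 k.
Proof.
rewrite /Npoly /Gw -natz natr_sum big_mkcond /=; apply: eq_bigr => mm _.
rewrite /sm /ws; case: ifP => [/andP[/eqP s3 /eqP w3]|_]; last by rewrite !mul0r.
rewrite mul1r /mult /sm s3 /pf /pd natrM natr_prod natz.
congr (_ * _); apply: eq_bigr => i _; by rewrite natrX natz.
Qed.

Lemma bF : (false%:R : int) = 0. Proof. by []. Qed.
Lemma bT : (true%:R : int) = 1. Proof. by []. Qed.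

Lemma sum_ind (f : nat -> int) (v K : nat) :
  \sum_(w < K) (v == w)%:R * f w = (v < K)%N%:R * f v.
Proof.
elim: K => [|K IH]; first by rewrite big_ord0 mul0r.
rewrite big_ord_recr /= IH.
have [lt|gt|->] := ltngtP v K.
- by rewrite ltnS (ltnW lt) bF bT mul0r addr0.
- by rewrite ltnS leqNgt gt bF !mul0r addr0.
- by rewrite ltnSn bF bT mul0r add0r.
Qed.

Lemma dvd_sum I (r : seq I) (P : pred I) (F : I -> int) (q : int) :
  (forall i, P i -> (q %| F i)%Z) -> (q %| \sum_(i <- r | P i) F i)%Z.
Proof. by move=> H; apply: rpred_sum. Qed.

Lemma cube_mod d K : ((3:int) ^+ K %| trunc3 d K ^+ 3 - \sum_(w < K) 3 ^+ w * Gw d K 3 w)%Z.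
Proof.
rewrite -Fs_trunc // /Fs /Gw.
under [X in _ - X]eq_bigr => w _ do rewrite big_distrr.
rewrite (exchange_big _ _ (index_enum _)) /= -sumrB.
apply: dvd_sum => mm _.
rewrite (eq_bigr (fun w : 'I_K => (ws mm == w)%:R *
      ((sm mm == 3)%:R * 3 ^+ (nat_of_ord w) * (mult mm)%:Z * pd d mm))); last first.
  by move=> w _; case: (sm mm == 3); case: (ws mm == w); rewrite ?bF ?bT /=; ring.
rewrite (sum_ind (fun w => (sm mm == 3)%:R * 3 ^+ w * (mult mm)%:Z * pd d mm)).
case: (ltnP (ws mm) K) => h; first by rewrite bT mul1r subrr dvdz0.
apply/dvdzP; exists ((sm mm == 3)%:R * 3 ^+ (ws mm - K) * (mult mm)%:Z * pd d mm).
rewrite bF mul0r subr0 -{1}(subnK h) exprD; ring.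
Qed.

Lemma tri (f : nat -> nat -> int) n :
  \sum_(i < n) \sum_(l < n - i) f i l = \sum_(k < n) \sum_(i < k.+1) f i (k - i)%N.
Proof.
elim: n => [|n IH]; first by rewrite !big_ord0.
rewrite big_ord_recr [RHS]big_ord_recr /= -IH.
rewrite (eq_bigr (fun i : 'I_n => \sum_(l < n - i) f i l + f i (n - i)%N)); last first.
  by move=> i _; rewrite subSn ?big_ord_recr // ltnW.
rewrite big_split /= subSnn big_ord1 [X in _ = _ + X]big_ord_recr /= subnn -addrA.
by [].
Qed.

Lemma lin_mod (a x : digits) n :
  ((3:int) ^+ n %| trunc3 a n * trunc3 x n - \sum_(k < n) conv x a k * 3 ^+ k)%Z.
Proof.
pose F i l := (a i)%:Z * 3 ^+ i * ((x l)%:Z * 3 ^+ l).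
have E : trunc3 a n * trunc3 x n = \sum_(i < n) \sum_(l < n) F i l.
  by rewrite /trunc3 big_distrl /=; apply: eq_bigr => i _; rewrite big_distrr.
have E2 : \sum_(i < n) \sum_(l < n) F i l = \sum_(i < n) \sum_(l < n - i) F i l
        + \sum_(i < n) \sum_(n - i <= l < n) F i l.
  rewrite -big_split /=; apply: eq_bigr => i _.
  rewrite -(big_mkord xpredT (F i)) (@big_cat_nat _ _ _ (n - i) 0 n) ?leq_subr // big_mkord.
  by [].
have E3 : \sum_(i < n) \sum_(l < n - i) F i l = \sum_(k < n) conv x a k * 3 ^+ k.
  rewrite tri; apply: eq_bigr => k _; rewrite /conv big_distrl /=.
  apply: eq_bigr => i _; rewrite /F.
  have hi : (i <= k)%N by rewrite -ltnS ltn_ord.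
  have e3 : (3:int) ^+ k = 3 ^+ i * 3 ^+ (k - i) by rewrite -exprD subnKC.
  rewrite e3; ring.
rewrite E E2 E3 [X in X - _]addrC addrK.
apply: dvd_sum => i _; rewrite big_nat_cond; apply: dvd_sum => l /andP [/andP [h1 _] _].
apply/dvdzP; exists ((a i)%:Z * (x l)%:Z * 3 ^+ (i + l - n)).
have h : (n <= i + l)%N by rewrite -(leq_add2l i) subnKC ?(ltnW (ltn_ord i)) // in h1; lia.
have e3 : (3:int) ^+ i * 3 ^+ l = 3 ^+ (i + l - n) * 3 ^+ n by rewrite -!exprD subnK.
rewrite /F; transitivity ((a i)%:Z * (x l)%:Z * (3 ^+ i * 3 ^+ l)); first ring.
rewrite e3; ring.
Qed.

Definition Cw (x : digits) (w : nat) : int :=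
  if w == 0%N then (x 0%N)%:Z ^+ 3 else 3 * (x 0%N)%:Z ^+ 2 * (x w)%:Z + Npoly w x.

Lemma G_C x K w : (w < K)%N -> Gw x K 3 w = Cw x w.
Proof.
move=> wK; rewrite G_far // /Cw.
case: w {wK} => [|w]; first by rewrite G1_0.
rewrite G_step // G_0 // Npoly_G /=; ring.
Qed.

Lemma cube_C x n : ((3:int) ^+ n %| trunc3 x n ^+ 3 - \sum_(w < n) 3 ^+ w * Cw x w)%Z.
Proof.
rewrite (eq_bigr (fun w : 'I_n => 3 ^+ w * Gw x n 3 w)); first exact: cube_mod.
by move=> w _; rewrite G_C.
Qed.

Definition Dk (m : nat) (x : digits) (k : nat) : int :=
  (if k == m then (x 0%N)%:Z ^+ 3 else 0)
  + (if (m.+2 <= k)%N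
     then (x 0%N)%:Z ^+ 2 * (x (k - m.+1)%N)%:Z + Npoly (k - m)%N x
     else 0).

Lemma Tterm_D m a x k : Tterm m a x k = conv x a k + Dk m x k.
Proof. by rewrite /Tterm /Dk addrA. Qed.

Lemma Npoly1 x : Npoly 1 x = 0.
Proof. by rewrite Npoly_G /Gw big1 // => mm _; rewrite /ws big_ord1 /= andbF !mul0r. Qed.

Lemma sumD_lt m x n : (n <= m)%N -> \sum_(k < n) Dk m x k * 3 ^+ k = 0.
Proof.
move=> nm; apply: big1 => k _; rewrite /Dk.
have k1 : (k == m :> nat) = false by apply/negbTE/eqP; move: (ltn_ord k); lia.
have k2 : (m.+2 <= k)%N = false by apply/negbTE; move: (ltn_ord k); lia.
by rewrite k1 k2 addr0 mul0r.
Qed.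

Lemma Dk_m m x : Dk m x m = (x 0%N)%:Z ^+ 3.
Proof. by rewrite /Dk eqxx ltnNge leqnSn /= addr0. Qed.
Lemma Dk_m1 m x : Dk m x (m + 1) = 0.
Proof.
rewrite /Dk; have -> : (m + 1 == m)%N = false by apply/negbTE/eqP; lia.
by have -> : (m.+2 <= m + 1)%N = false by apply/negbTE; lia.
Qed.
Lemma Dk_big m x j : Dk m x (m + j.+2) = (x 0%N)%:Z ^+ 2 * (x j.+1)%:Z + Npoly j.+2 x.
Proof.
rewrite /Dk; have -> : (m + j.+2 == m)%N = false by apply/negbTE/eqP; lia.
have -> : (m.+2 <= m + j.+2)%N by lia.
have -> : (m + j.+2 - m.+1 = j.+1)%N by lia.
have -> : (m + j.+2 - m = j.+2)%N by lia.
by rewrite add0r.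
Qed.

Lemma shift m x j :
  3 ^+ m * \sum_(w < j) 3 ^+ w * Cw x w =
  \sum_(k < m + j) Dk m x k * 3 ^+ k
  + (if (2 <= j)%N then 3 ^+ (m + j) * (x 0%N)%:Z ^+ 2 * (x (j.-1))%:Z else 0).
Proof.
elim: j => [|j IH]; first by rewrite big_ord0 addn0 sumD_lt // mulr0 addr0.
rewrite big_ord_recr mulrDr IH addnS big_ord_recr /=.
set S := \sum_(k < m + j) _.
case: j IH S => [|[|j]] IH S.
- rewrite addn0 Dk_m /Cw /=; ring.
- rewrite Dk_m1 /Cw Npoly1 /= [3 ^+ (_ + _).+1]exprS exprD; ring.
- rewrite Dk_big /Cw /= [3 ^+ (_ + _).+1]exprS exprD; ring.
Qed.

Lemma cubic_part m x n :
  ((3:int) ^+ n %| 3 ^+ m * trunc3 x n ^+ 3 - \sum_(k < n) Dk m x k * 3 ^+ k)%Z.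
Proof.
case: (leqP n m) => nm.
  rewrite sumD_lt // subr0; apply/dvdzP; exists (3 ^+ (m - n) * trunc3 x n ^+ 3).
  have e : (3:int) ^+ m = 3 ^+ (m - n) * 3 ^+ n by rewrite -exprD subnK.
  by rewrite e; ring.
have [j ->] : exists j, n = (m + j)%N by exists (n - m)%N; rewrite subnKC // ltnW.
have /dvdzP [q hq] := cube_C x (m + j).
have hsplit : \sum_(w < m + j) 3 ^+ w * Cw x w =
   \sum_(w < j) 3 ^+ w * Cw x w + 3 ^+ j * \sum_(j <= w < m + j) 3 ^+ (w - j) * Cw x w.
  rewrite -(big_mkord xpredT (fun w => 3 ^+ w * Cw x w)).
  rewrite (@big_cat_nat _ _ _ j 0 (m + j)) ?leq_addl //= big_mkord; congr (_ + _).
  rewrite big_distrr /= big_nat_cond [RHS]big_nat_cond; apply: eq_bigr => w /andP [/andP [h1 _] _].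
  by rewrite mulrA -exprD subnKC.
have hs := shift m x j.
apply/dvdzP.
exists (3 ^+ m * q + (if (2 <= j)%N then (x 0%N)%:Z ^+ 2 * (x j.-1)%:Z else 0)
        + \sum_(j <= w < m + j) 3 ^+ (w - j) * Cw x w).
have -> : trunc3 x (m + j) ^+ 3 = q * 3 ^+ (m + j) + \sum_(w < m + j) 3 ^+ w * Cw x w.
  by rewrite -hq subrK.
rewrite hsplit mulrDr mulrDr hs.
case: (2 <= j)%N; rewrite !exprD; ring.
Qed.

Definition Ssum m (A B x : digits) n : int :=
  \sum_(k < n) (Tterm m A x k - (B k)%:Z) * 3 ^+ k.

Lemma SsumS m A B x n : Ssum m A B x n.+1 = Ssum m A B x n + (Tterm m A x n - (B n)%:Z) * 3 ^+ n.
Proof. by rewrite /Ssum big_ord_recr. Qed.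

Lemma S_M m A B x n : (forall k, (k < n)%N -> congr_k m A B x k) ->
  Ssum m A B x n = 3 ^+ n * Mseq m A B x n.
Proof.
elim: n => [|n IH] H; first by rewrite /Ssum big_ord0 mul1r.
rewrite SsumS IH => [|k kn]; last by apply: H; apply: ltnW.
have c := H n (ltnSn n); rewrite /congr_k in c.
have hq : ((Tterm m A x n - (B n)%:Z + Mseq m A B x n) %/ 3)%Z * 3 =
    Tterm m A x n - (B n)%:Z + Mseq m A B x n.
  by rewrite divzK // (_ : _ - _ + _ = Tterm m A x n + Mseq m A B x n - (B n)%:Z) //; ring.
rewrite /= [RHS](_ : _ = 3 ^+ n * (((Tterm m A x n - (B n)%:Z + Mseq m A B x n) %/ 3)%Z * 3)).
  by rewrite hq; ring.
by rewrite exprSr; ring.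
Qed.

Lemma congr_iff m A B x :
  (forall k, congr_k m A B x k) <-> (forall n, ((3:int) ^+ n %| Ssum m A B x n)%Z).
Proof.
split=> [H n|H].
  by rewrite (S_M (fun k _ => H k)); apply/dvdzP; exists (Mseq m A B x n); rewrite mulrC.
suff : forall n k, (k < n)%N -> congr_k m A B x k by move=> h k; apply: (h k.+1).
elim=> [//|n IH] k; rewrite ltnS leq_eqVlt => /orP [/eqP ->|]; last exact: IH.
have := H n.+1; rewrite SsumS (S_M IH) exprSr.
rewrite (_ : _ + _ = 3 ^+ n * (Tterm m A x n + Mseq m A B x n - (B n)%:Z)); last by ring.
by rewrite dvdz_mul2l // expf_neq0.
Qed.

Lemma key_diff m A B x n :
  ((3:int) ^+ n %| (3 ^+ m * trunc3 x n ^+ 3 + trunc3 A n * trunc3 x n - trunc3 B n)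
                   - Ssum m A B x n)%Z.
Proof.
have -> : Ssum m A B x n = \sum_(k < n) conv x A k * 3 ^+ k + \sum_(k < n) Dk m x k * 3 ^+ k
                            - trunc3 B n.
  rewrite /Ssum /trunc3 -big_split -sumrB /=; apply: eq_bigr => k _; rewrite Tterm_D; ring.
rewrite (_ : _ - _ = (3 ^+ m * trunc3 x n ^+ 3 - \sum_(k < n) Dk m x k * 3 ^+ k)
                     + (trunc3 A n * trunc3 x n - \sum_(k < n) conv x A k * 3 ^+ k)); last by ring.
by apply: rpredD; [apply: cubic_part | apply: lin_mod].
Qed.

Theorem theorem3p3 (m : nat) (a b : Q3c) (x : digits) :
  (0 < m)%N ->
  canonical_Q3 a -> canonical_Q3 b ->
  gam a = - (m%:Z) -> gam b = - (m%:Z) ->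
  Z3_unit x ->
  (Q3_cubic_eq a b x <-> forall k : nat, congr_k m (dig a) (dig b) x k).
Proof.
move=> hm _ _ ga gb _.
rewrite congr_iff /Q3_cubic_eq ga gb minxx min_r ?oppr_le0 // subrr opprK /=.
split=> H n; have := key_diff m (dig a) (dig b) x n; have := H n;
  rewrite !expr0 !mul1r.
- by move=> h1 h2; rewrite -(subKr (3 ^+ m * trunc3 x n ^+ 3 + trunc3 (dig a) n * trunc3 x n - trunc3 (dig b) n) (Ssum _ _ _ _ n)) rpredB.
- move=> h1 h2; rewrite (_ : _ - _ = (3 ^+ m * trunc3 x n ^+ 3 + trunc3 (dig a) n * trunc3 x n - trunc3 (dig b) n - Ssum m (dig a) (dig b) x n) + Ssum m (dig a) (dig b) x n); last by ring.
  exact: rpredD.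
Qed.
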